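(* Let $\Lambda$ be a left-artinian ring, $\mathcal{C}=\mathrm{mod}(\Lambda)$, $\mathcal{S}$ a set of (isoclasses of) simple $\Lambda$-modules and $M\in\mathcal{C}$. If $t_{\mathcal{S}}(M)\neq0$ then $\ell\ell^{t_{\mathcal{S}}}(\Omega\, t_{\mathcal{S}}(M))\leq\ell\ell^{t_{\mathcal{S}}}({}_\Lambda\Lambda)-1$.
   Context: $\mathcal{C}$ is the category of finitely generated left $\Lambda$-modules; $\Omega(N)$ denotes the first syzygy of $N$, i.e. the kernel of the projective cover $P\to N$. For a set $\mathcal{S}$ of simple modules, $\mathcal{X}_{\mathcal{S}}$ is the class of modules with a finite filtration whose factors are isomorphic to modules in $\mathcal{S}$; $\mathcal{T}_{\mathcal{S}}=\{M:\mathrm{Hom}_\Lambda(M,X)=0\ \forall X\in\mathcal{X}_{\mathcal{S}}\}$; $t_{\mathcal{S}}(M)$ is the submodule generated by images of maps $T\to M$, $T\in\mathcal{T}_{\mathcal{S}}$. $\ell\ell^{t_{\mathcal{S}}}(M)=\min\{i\geq0:t_{\mathcal{S}}\circ(\mathrm{rad}\circ t_{\mathcal{S}})^i(M)=0\}$. *)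

(* Defs.v *)
(* Left modules over a (possibly noncommutative) ring R are
   MathComp's [lmodType R]; submodules are Prop-valued predicates on the
   ambient module. *)
From HB Require Import structures.
From mathcomp Require Import all_boot all_algebra.
Set Implicit Arguments. Unset Strict Implicit. Unset Printing Implicit Defensive.
Import GRing.Theory.
Local Open Scope ring_scope.

Section ModuleDefs.
Variable R : nzRingType.

Definition msub (M : lmodType R) (A B : M -> Prop) := forall x, A x -> B x.
Definition meq (M : lmodType R) (A B : M -> Prop) := forall x, A x <-> B x.
Definition mzero (M : lmodType R) (A : M -> Prop) := forall x, A x -> x = 0.

Definition submodule (M : lmodType R) (A : M -> Prop) :=
  A 0 /\ forall (a : R) (x y : M), A x -> A y -> A (a *: x + y).

Definition fin_gen (M : lmodType R) :=
  exists s : seq M, forall x : M, exists r : seq R,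
    size r = size s /\ x = \sum_(i < size s) r`_i *: s`_i.

Definition left_artinian :=
  forall I : nat -> R^o -> Prop, (forall n, submodule (I n)) ->
    (forall n, msub (I n.+1) (I n)) ->
    exists N, forall n, (N <= n)%N -> meq (I n) (I N).

Definition simple_module (M : lmodType R) :=
  (exists x : M, x != 0) /\
  forall A : M -> Prop, submodule A -> mzero A \/ (forall x, A x).

Definition linear_on (M N : lmodType R) (A : M -> Prop) (f : M -> N) :=
  forall (a : R) x y, A x -> A y -> f (a *: x + y) = a *: f x + f y.

(* B/A is isomorphic to Sm (A subset B submodules of M): a map linear on B,
   onto Sm, whose kernel on B is exactly A *)
Definition factor_iso (M : lmodType R) (B A : M -> Prop) (Sm : lmodType R) :=
  exists f : M -> Sm, [/\ linear_on B f,
    (forall s, exists2 x, B x & f x = s) &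
    (forall x, B x -> (f x = 0 <-> A x))].

Definition XS (S : lmodType R -> Prop) (X : lmodType R) :=
  exists (n : nat) (F : nat -> X -> Prop),
    [/\ forall i, submodule (F i),
        meq (F 0%N) (fun x => x = 0),
        meq (F n) (fun _ => True),
        forall i, msub (F i) (F i.+1) &
        forall i, (i < n)%N -> exists2 Sm, S Sm & factor_iso (F i.+1) (F i) Sm].

Definition TS (S : lmodType R -> Prop) (T : lmodType R) :=
  fin_gen T /\
  forall (X : lmodType R), XS S X -> forall (f : {linear T -> X}) x, f x = 0.

(* t_S applied to the submodule A of the ambient module M: the submodule
   generated by images of maps T -> A with T in T_S *)
Definition tS (S : lmodType R -> Prop) (M : lmodType R) (A : M -> Prop) : M -> Prop :=
  fun x => forall B : M -> Prop, submodule B ->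
    (forall (T : lmodType R) (f : {linear T -> M}), TS S T ->
       (forall y, A (f y)) -> forall y, B (f y)) -> B x.

Definition maximal_sub (M : lmodType R) (A L : M -> Prop) :=
  [/\ submodule L, msub L A, ~ msub A L &
      forall L' : M -> Prop, submodule L' -> msub L L' -> msub L' A ->
        meq L' L \/ meq L' A].

Definition rad (M : lmodType R) (A : M -> Prop) : M -> Prop :=
  fun x => A x /\ forall L, maximal_sub A L -> L x.

Fixpoint tS_iter (S : lmodType R -> Prop) (M : lmodType R) (A : M -> Prop) (i : nat)
  : M -> Prop :=
  match i with
  | 0 => tS S A
  | i'.+1 => tS S (rad (tS_iter S A i'))
  end.

Definition is_llt (S : lmodType R -> Prop) (M : lmodType R) (A : M -> Prop) (n : nat) :=
  mzero (tS_iter S A n) /\ forall i, (i < n)%N -> ~ mzero (tS_iter S A i).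

Definition projective (P : lmodType R) :=
  forall (X Y : lmodType R) (g : {linear X -> Y}) (f : {linear P -> Y}),
    (forall y, exists x, g x = y) ->
    exists h : {linear P -> X}, forall p, g (h p) = f p.

(* p : P -> M is a projective cover of the submodule A of M
   (P f.g. projective, image of p is A, kernel superfluous) *)
Definition proj_cover (P M : lmodType R) (A : M -> Prop) (p : {linear P -> M}) :=
  [/\ fin_gen P, projective P,
      meq (fun m => exists x, p x = m) A &
      forall L : P -> Prop, submodule L ->
        (forall x, exists2 k, p k = 0 & exists2 l, L l & x = k + l) ->
        forall x, L x].

End ModuleDefs.

(* Main.v *)
Require Import Defs.
From HB Require Import structures.
From mathcomp Require Import all_boot all_algebra zify.
From mathcomp Require classical_sets.
From Stdlib Require Import Classical ClassicalEpsilon.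
Local Open Scope ring_scope.
Import GRing.Theory.
Set Implicit Arguments. Unset Strict Implicit. Unset Printing Implicit Defensive.

Definition mkLin (R : nzRingType) (U V : lmodType R) (f : U -> V)
  (H : forall a x y, f (a *: x + y) = a *: f x + f y) : {linear U -> V} :=
  HB.pack f (GRing.isLinear.Build R U V *:%R f H).

Lemma mkLinE (R : nzRingType) (U V : lmodType R) (f : U -> V) H x :
  @mkLin R U V f H x = f x.
Proof. reflexivity. Qed.

Lemma sub0 (R : nzRingType) (M : lmodType R) (A : M -> Prop) :
  submodule A -> A 0.
Proof. by case. Qed.

Lemma subD (R : nzRingType) (M : lmodType R) (A : M -> Prop) x y :
  submodule A -> A x -> A y -> A (x + y).
Proof. by case=> _ H Ax Ay; have := H 1 x y Ax Ay; rewrite scale1r. Qed.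

Lemma subZ (R : nzRingType) (M : lmodType R) (A : M -> Prop) a x :
  submodule A -> A x -> A (a *: x).
Proof. by case=> A0 H Ax; have := H a x 0 Ax A0; rewrite addr0. Qed.

Lemma subN (R : nzRingType) (M : lmodType R) (A : M -> Prop) x :
  submodule A -> A x -> A (- x).
Proof. by move=> sA Ax; rewrite -scaleN1r; apply: subZ. Qed.

Lemma subB (R : nzRingType) (M : lmodType R) (A : M -> Prop) x y :
  submodule A -> A x -> A y -> A (x - y).
Proof. by move=> sA Ax Ay; apply: subD => //; apply: subN. Qed.

Lemma subL (R : nzRingType) (A : R^o -> Prop) (a x : R) :
  submodule A -> A x -> A (a * x).
Proof. by move=> sA Ax; apply: (subZ (M:=R^o) a sA Ax). Qed.

Lemma sub_sum (R : nzRingType) (M : lmodType R) (A : M -> Prop) (I : Type)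
  (r : seq I) (P : pred I) (F : I -> M) :
  submodule A -> (forall i, P i -> A (F i)) -> A (\sum_(i <- r | P i) F i).
Proof.
move=> sA H; elim/big_rec: _ => [|i x Pi Ax]; first exact: sub0.
by apply: subD => //; apply: H.
Qed.

Lemma subT (R : nzRingType) (M : lmodType R) : submodule (fun _ : M => True).
Proof. by []. Qed.

Lemma sub_cap (R : nzRingType) (M : lmodType R) (A B : M -> Prop) :
  submodule A -> submodule B -> submodule (fun x => A x /\ B x).
Proof.
move=> [A0 HA] [B0 HB]; split=> // a x y [? ?] [? ?]; split; [exact: HA|exact: HB].
Qed.

Lemma sub_zero (R : nzRingType) (M : lmodType R) : submodule (fun x : M => x = 0).
Proof. by split=> // a x y -> ->; rewrite scaler0 addr0. Qed.

Definition sadd (R : nzRingType) (M : lmodType R) (A B : M -> Prop) :=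
  fun x => exists a b, [/\ A a, B b & x = a + b].

Lemma sub_sadd (R : nzRingType) (M : lmodType R) (A B : M -> Prop) :
  submodule A -> submodule B -> submodule (sadd A B).
Proof.
move=> sA sB; split; first by exists 0, 0; rewrite addr0; split=> //; apply: sub0.
move=> c x y [a [b [Aa Bb ->]]] [a' [b' [Aa' Bb' ->]]].
exists (c *: a + a'), (c *: b + b'); split.
- by case: sA => _; apply.
- by case: sB => _; apply.
- by rewrite scalerDr addrACA.
Qed.

Lemma tS_sub (R : nzRingType) S (M : lmodType R) (A : M -> Prop) :
  submodule (tS S A).
Proof.
split; first by move=> B sB _; apply: sub0.
move=> a x y Hx Hy B sB H; case: (sB) => _; apply; [exact: Hx|exact: Hy].
Qed.

Lemma tS_le (R : nzRingType) S (M : lmodType R) (A : M -> Prop) x :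
  submodule A -> tS S A x -> A x.
Proof. by move=> sA; apply=> // T f _; apply. Qed.

Lemma tS_img (R : nzRingType) S (M T : lmodType R) (A : M -> Prop)
  (f : {linear T -> M}) y :
  TS S T -> (forall y, A (f y)) -> tS S A (f y).
Proof. by move=> TT fA B sB H; apply: H. Qed.

Lemma tS_fun (R : nzRingType) S (M N : lmodType R) (g : {linear M -> N})
  (A : M -> Prop) (B : N -> Prop) :
  (forall x, A x -> B (g x)) -> forall x, tS S A x -> tS S B (g x).
Proof.
move=> AB x Hx C sC HC.
apply: (Hx (fun x => C (g x))).
  split; first by rewrite linear0; apply: sub0.
  by move=> a u v Cu Cv; rewrite linearP; case: sC => _; apply.
move=> T f TT fA y.
have hl : forall a u v, g (f (a *: u + v)) = a *: g (f u) + g (f v).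
  by move=> a u v; rewrite !linearP.
pose h := mkLin hl.
exact: (HC T h TT (fun y => AB _ (fA y)) y).
Qed.
Lemma rad_le (R : nzRingType) (M : lmodType R) (A : M -> Prop) x :
  Defs.rad A x -> A x.
Proof. by case. Qed.

Lemma rad_sub (R : nzRingType) (M : lmodType R) (A : M -> Prop) :
  submodule A -> submodule (Defs.rad A).
Proof.
move=> sA; split.
  by split; [apply: sub0|move=> L [sL _ _ _]; apply: sub0].
move=> a x y [Ax Hx] [Ay Hy]; split; first by case: sA => _; apply.
by move=> L mL; case: (mL) => [[_ HL] _ _ _]; apply: HL; [apply: Hx|apply: Hy].
Qed.

Lemma rad_fun (R : nzRingType) (M N : lmodType R) (g : {linear M -> N})
  (A : M -> Prop) (B : N -> Prop) :
  submodule A -> submodule B ->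
  (forall x, A x -> B (g x)) -> forall x, Defs.rad A x -> Defs.rad B (g x).
Proof.
move=> sA sB AB x [Ax Hx]; split; first exact: AB.
move=> L [sL LB nBL maxL].
case: (classic (forall a, A a -> L (g a))) => [H|H]; first exact: H.
have [a0 Ha0] := not_all_ex_not _ _ H.
have [Aa0 nLa0] := imply_to_and _ _ Ha0.
pose K := fun x => A x /\ L (g x).
suff: maximal_sub A K by move=> /Hx [].
split.
- split; first by split; [apply: sub0|rewrite linear0; apply: sub0].
  move=> c u v [Au Lu] [Av Lv]; split; first by case: sA => _; apply.
  by rewrite linearP; case: sL => _; apply.
- by move=> u [].
- by move=> H0; apply: nLa0; case: (H0 a0 Aa0).
move=> L' sL' KL' L'A.
pose L'' := fun n => exists l l', [/\ L l, L' l' & n = l + g l'].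
have sL'' : submodule L''.
  split; first by exists 0, 0; rewrite linear0 addr0; split=> //; apply: sub0.
  move=> c u v [l [l' [Ll Ll' ->]]] [m [m' [Lm Lm' ->]]].
  exists (c *: l + m), (c *: l' + m'); split.
  + by case: sL => _; apply.
  + by case: sL' => _; apply.
  + by rewrite linearP scalerDr addrACA.
have LL'' : msub L L''.
  by move=> l Ll; exists l, 0; rewrite linear0 addr0; split=> //; apply: sub0.
have L''B : msub L'' B.
  by move=> n [l [l' [Ll Ll' ->]]]; apply: subD => //; [apply: LB|apply: AB; apply: L'A].
case: (maxL L'' sL'' LL'' L''B) => [EL|EB].
- left=> u; split; last exact: KL'.
  move=> L'u; split; first exact: L'A.
  by apply/EL; exists 0, u; rewrite add0r; split=> //; apply: sub0.
- right=> u; split; first exact: L'A.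
  move=> Au; have /EB [l [l' [Ll Ll' Eg]]] := AB u Au.
  have K1 : K (u - l').
    split; first by apply: subB => //; apply: L'A.
    by rewrite linearB Eg addrK.
  have := KL' _ K1 => H1.
  by have := subD sL' H1 Ll'; rewrite subrK.
Qed.

Lemma tS_iter_sub (R : nzRingType) S (M : lmodType R) (A : M -> Prop) i :
  submodule (tS_iter S A i).
Proof. by case: i => [|i] /=; apply: tS_sub. Qed.

Lemma tS_iter_fun (R : nzRingType) S (M N : lmodType R) (g : {linear M -> N})
  (A : M -> Prop) (B : N -> Prop) :
  (forall x, A x -> B (g x)) -> forall i x, tS_iter S A i x -> tS_iter S B i (g x).
Proof.
move=> AB; elim=> [|i IH] x /=; first exact: tS_fun.
apply: tS_fun; apply: rad_fun; [exact: tS_iter_sub|exact: tS_iter_sub|exact: IH].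
Qed.

Lemma tS_mono (R : nzRingType) S (M : lmodType R) (A B : M -> Prop) :
  msub A B -> msub (tS S A) (tS S B).
Proof.
move=> AB x Hx C sC HC; apply: Hx => // T f TT fA.
by apply: HC => // y; apply: AB.
Qed.

Definition idLin (R : nzRingType) (M : lmodType R) : {linear M -> M} :=
  @mkLin R M M id (fun a x y => erefl).

Lemma rad_mono (R : nzRingType) (M : lmodType R) (A B : M -> Prop) :
  submodule A -> submodule B -> msub A B -> msub (Defs.rad A) (Defs.rad B).
Proof. by move=> sA sB AB x; apply: (rad_fun (g:=idLin M)). Qed.
From Stdlib Require Import FunctionalExtensionality PropExtensionality.

Lemma zorn_sub (R : nzRingType) (M : lmodType R) (N C : M -> Prop) (y : M) :
  submodule C -> msub C N -> ~ C y ->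
  exists K, [/\ submodule K, msub C K, msub K N, ~ K y &
    forall K', submodule K' -> msub K K' -> msub K' N -> ~ K' y -> msub K' K].
Proof.
move=> sC CN nCy.
pose good := fun K : M -> Prop => [/\ submodule K, msub C K, msub K N & ~ K y].
pose P := fun K : M -> Prop => K = (fun _ => False) \/ good K.
have mem_good : forall K x, P K -> K x -> good K.
  by move=> K x [->|//].
have [A [PA maxA]] : exists A, P A /\ forall B, classical_sets.proper A B -> ~ P B.
  apply: classical_sets.Zorn_bigcup => F FP Ftot.
  case: (classic (exists K, F K /\ good K)) => [[K0 [FK0 gK0]]|nF]; last first.
    left; apply: functional_extensionality => x; apply: propositional_extensionality.
    split=> // -[K FK Kx]; apply: nF; exists K; split=> //; exact: mem_good (FP _ FK) Kx.
  right; split.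
  - split; first by exists K0 => //; case: gK0 => [sK _ _ _]; apply: sub0.
    move=> a u v [K1 FK1 K1u] [K2 FK2 K2v].
    case: (Ftot _ _ FK1 FK2) => [S12|S21].
    + have [sK2 _ _ _] := mem_good _ _ (FP _ FK2) K2v.
      by exists K2 => //; case: sK2 => _; apply=> //; apply: S12.
    + have [sK1 _ _ _] := mem_good _ _ (FP _ FK1) K1u.
      by exists K1 => //; case: sK1 => _; apply=> //; apply: S21.
  - by move=> x Cx; exists K0 => //; case: gK0 => _ CK0 _ _; apply: CK0.
  - by move=> x [K FK Kx]; have [_ _ KN _] := mem_good _ _ (FP _ FK) Kx; apply: KN.
  - by move=> [K FK Ky]; have [_ _ _ nKy] := mem_good _ _ (FP _ FK) Ky; apply: nKy.
have gA : good A.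
  case: PA => // A0; exfalso; apply: (maxA C); last by rewrite /P; right; split.
  rewrite A0; split=> // H; have := H 0 (sub0 sC); done.
case: gA => sA CA AN nAy; exists A; split=> // K' sK' AK' K'N nK'y x K'x.
apply: NNPP => nAx; apply: (maxA K'); last first.
  by rewrite /P; right; split=> // z Cz; apply: AK'; apply: CA.
by split=> // H; apply: nAx; apply: H.
Qed.

Lemma ex_minnat (Q : nat -> Prop) : (exists n, Q n) ->
  exists n, Q n /\ forall i, (i < n)%N -> ~ Q i.
Proof.
move=> [n Qn]; elim/ltn_ind: n Qn => n IH Qn.
case: (classic (exists i, (i < n)%N /\ Q i)) => [[i [lin Qi]]|H].
  exact: IH i lin Qi.
by exists n; split=> // i lin Qi; apply: H; exists i.
Qed.

Lemma dcc_min (R : nzRingType) : left_artinian R ->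
  forall F : (R^o -> Prop) -> Prop, (forall K, F K -> submodule K) ->
  (exists K, F K) -> exists K, F K /\ forall K', F K' -> msub K' K -> msub K K'.
Proof.
move=> art F FS [K0 FK0]; apply: NNPP => H.
have step : forall K, F K -> exists K', F K' /\ msub K' K /\ ~ msub K K'.
  move=> K FK; apply: NNPP => H2; apply: H; exists K; split=> // K' FK' K'K.
  by apply: NNPP => nKK'; apply: H2; exists K'.
pose nxt := fun K : R^o -> Prop =>
  epsilon (inhabits (fun _ : R^o => True))
    (fun K' => F K' /\ msub K' K /\ ~ msub K K').
pose I := fun n => iter n nxt K0.
have FI : forall n, F (I n) /\ (msub (I n.+1) (I n) /\ ~ msub (I n) (I n.+1)).
  elim=> [|n [FIn _]].
    have [A B] := epsilon_spec (inhabits (fun _ : R^o => True)) _ (step _ FK0).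
    by split.
  have := epsilon_spec (inhabits (fun _ : R^o => True)) _ (step _ FIn).
  move=> [FIn1 _]; split=> //.
  by case: (epsilon_spec (inhabits (fun _ : R^o => True)) _ (step _ FIn1)).
have [N HN] := art I (fun n => FS _ (proj1 (FI n))) (fun n => proj1 (proj2 (FI n))).
have [_ [_ nsub]] := FI N; apply: nsub => x Ix.
by apply/(HN N.+1 (leqnSn N)).
Qed.

Definition Jr (R : nzRingType) : R^o -> Prop := Defs.rad (fun _ : R^o => True).
Definition maxl (R : nzRingType) (L : R^o -> Prop) :=
  maximal_sub (fun _ : R^o => True) L.

Lemma subLI (R : nzRingType) (A : R^o -> Prop) :
  A 0 -> (forall (a x y : R), A x -> A y -> A (a * x + y)) -> submodule A.
Proof. by move=> A0 H; split. Qed.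

Lemma J_sub (R : nzRingType) : submodule (@Jr R).
Proof. exact: rad_sub (subT _). Qed.

Lemma J_maxl (R : nzRingType) (L : R^o -> Prop) y : Jr y -> maxl L -> L y.
Proof. by case=> _ H mL; apply: H. Qed.

Lemma maxl_sub (R : nzRingType) (L : R^o -> Prop) : maxl L -> submodule L.
Proof. by case. Qed.

Lemma maxl_not1 (R : nzRingType) (L : R^o -> Prop) : maxl L -> ~ L 1.
Proof.
move=> [sL _ nTL _] L1; apply: nTL => r _.
by have := subL r sL L1; rewrite mulr1.
Qed.

Lemma maxl_gen (R : nzRingType) (L : R^o -> Prop) (r : R) :
  maxl L -> ~ L r -> exists l s, L l /\ 1 = l + s * r.
Proof.
move=> [sL _ nTL maxL] nLr.
pose L'' := fun z : R^o => exists l s, L l /\ z = l + s * r.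
have sL'' : submodule L''.
  apply: subLI; first by exists 0, 0; rewrite mul0r addr0; split=> //; apply: sub0.
  move=> a x y [l [s [Ll ->]]] [l' [s' [Ll' ->]]].
  exists (a * l + l'), (a * s + s'); split; first by case: sL => _; apply.
  by rewrite mulrDr mulrDl mulrA addrACA.
have LL'' : msub L L''.
  by move=> l Ll; exists l, 0; rewrite mul0r addr0.
case: (maxL L'' sL'' LL'' (fun _ _ => I)) => [EL|ET].
  by exfalso; apply: nLr; apply/EL; exists 0, 1; rewrite mul1r add0r; split=> //; apply: sub0.
have [l [s [Ll E]]] : L'' 1 by apply/ET.
by exists l, s.
Qed.

Lemma zorn_maxl (R : nzRingType) (C : R^o -> Prop) :
  submodule C -> ~ C 1 -> exists L, maxl L /\ msub C L.
Proof.
move=> sC nC1.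
have [K [sK CK _ nK1 maxK]] := @zorn_sub R R^o (fun _ => True) C 1 sC (fun _ _ => I) nC1.
exists K; split=> //; split=> //.
  by move=> H; apply: nK1; apply: H.
move=> L' sL' KL' _; case: (classic (L' 1)) => [L'1|nL'1].
  by right=> r; split=> // _; have := subL r sL' L'1; rewrite mulr1.
by left=> r; split; [apply: maxK|apply: KL'].
Qed.

Lemma J_unit (R : nzRingType) (y : R) : Jr y -> exists u, u * (1 - y) = 1.
Proof.
move=> Jy; pose C := fun z : R^o => exists u, z = u * (1 - y).
have sC : submodule C.
  apply: subLI; first by exists 0; rewrite mul0r.
  by move=> a x z [u ->] [v ->]; exists (a * u + v); rewrite mulrDl mulrA.
case: (classic (C 1)) => [[u Hu]|nC1]; first by exists u.
have [L [mL CL]] := zorn_maxl sC nC1.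
exfalso; apply: (maxl_not1 mL).
have L1y : L (1 - y) by apply: CL; exists 1; rewrite mul1r.
have := subD (maxl_sub mL) L1y (J_maxl Jy mL); by rewrite subrK.
Qed.

Lemma J_two (R : nzRingType) (y a : R) : Jr y -> Jr (y * a).
Proof.
move=> Jy; split=> // L mL.
have sL := maxl_sub mL.
pose L' := fun r : R^o => L (r * a).
case: (classic (forall r, L' r)) => [H|H]; first exact: H.
have [t nLt] := not_all_ex_not _ _ H.
have nLa : ~ L a by move=> La; apply: nLt; apply: subL.
suff mL' : maxl L' by apply: (J_maxl Jy mL').
have sL' : submodule L'.
  apply: subLI; first by rewrite /L' mul0r; apply: sub0.
  by move=> b x z Lx Lz; rewrite /L' mulrDl -mulrA; apply: subD => //; apply: subL.
split=> //; first by move=> H0; apply: H => r; apply: H0.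
move=> L'' sL'' L'L'' _.
case: (classic (msub L'' L')) => [HL|HL]; first by left=> r; split; [apply: HL|apply: L'L''].
right=> s; split=> // _.
have [r Hr] := not_all_ex_not _ _ HL.
have [L''r nL'r] := imply_to_and _ _ Hr.
have [l [s' [Ll E1]]] := maxl_gen mL nL'r.
have [l0 [u [Ll0 E0]]] := maxl_gen mL nLa.
have L''u : L'' u.
  have : L' (u - s' * r).
    rewrite /L' mulrBl -mulrA.
    have -> : u * a = 1 - l0 by rewrite E0 [l0 + _]addrC addrK.
    have -> : s' * (r * a) = 1 - l by rewrite E1 [l + _]addrC addrK.
    by rewrite opprB addrC subrKA; apply: subB.
  move=> /L'L'' H1; have := subD sL'' H1 (subL s' sL'' L''r); by rewrite subrK.
have : L' (s - s * a * u).
  rewrite /L'.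
  have -> : (s - s * a * u) * a = (s * a) * (1 - u * a).
    by rewrite mulrBl mulrBr mulr1 !mulrA.
  have -> : u * a = 1 - l0 by rewrite E0 [l0 + _]addrC addrK.
  by rewrite opprB addrC subrK; apply: subL.
move=> /L'L'' H1; have := subD sL'' H1 (subL (s * a) sL'' L''u); by rewrite subrK.
Qed.

Definition span (R : nzRingType) (M : lmodType R) (G : M -> Prop) : M -> Prop :=
  fun x => exists s : seq M, List.Forall G s /\ x = \sum_(g <- s) g.

Lemma span_gen (R : nzRingType) (M : lmodType R) (G : M -> Prop) g :
  G g -> span G g.
Proof. by move=> Gg; exists [:: g]; rewrite big_seq1; split=> //; constructor. Qed.

Lemma span0 (R : nzRingType) (M : lmodType R) (G : M -> Prop) : span G 0.
Proof. by exists [::]; rewrite big_nil. Qed.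

Lemma span_add (R : nzRingType) (M : lmodType R) (G : M -> Prop) x y :
  span G x -> span G y -> span G (x + y).
Proof.
move=> [s [Gs ->]] [t [Gt ->]]; exists (s ++ t); rewrite big_cat; split=> //.
by apply/List.Forall_app.
Qed.

Lemma span_subm (R : nzRingType) (M : lmodType R) (G : M -> Prop) :
  (forall a g, G g -> G (a *: g)) -> submodule (span G).
Proof.
move=> GZ; split; first exact: span0.
move=> a x y [s [Gs ->]] Sy; apply: span_add => //.
exists (map (fun g => a *: g) s); rewrite big_map scaler_sumr; split=> //.
elim: s Gs => [|g s IH] Gs /=; first by constructor.
by inversion Gs; constructor; [apply: GZ|apply: IH].
Qed.

Lemma span_le (R : nzRingType) (M : lmodType R) (G B : M -> Prop) :
  submodule B -> msub G B -> msub (span G) B.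
Proof.
move=> sB GB x [s [Gs ->]]; elim: s Gs => [|g s IH] Gs; first by rewrite big_nil; apply: sub0.
by inversion Gs; rewrite big_cons; apply: subD => //; [apply: GB|apply: IH].
Qed.

Lemma span_map (R : nzRingType) (M N : lmodType R) (G : M -> Prop) (G' : N -> Prop)
  (f : M -> N) : f 0 = 0 -> (forall x y, f (x + y) = f x + f y) ->
  (forall g, G g -> span G' (f g)) -> forall x, span G x -> span G' (f x).
Proof.
move=> f0 fD fG x [s [Gs ->]]; elim: s Gs => [|g s IH] Gs.
  by rewrite big_nil f0; apply: span0.
by inversion Gs; rewrite big_cons fD; apply: span_add; [apply: fG|apply: IH].
Qed.

Lemma span_mono (R : nzRingType) (M : lmodType R) (G G' : M -> Prop) :
  msub G G' -> msub (span G) (span G').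
Proof.
move=> GG' x; apply: (span_map (f:=id)) => // g Gg; apply: span_gen; exact: GG'.
Qed.

Lemma span_zero (R : nzRingType) (M : lmodType R) (G : M -> Prop) x :
  (forall g, G g -> g = 0) -> span G x -> x = 0.
Proof. by move=> H; apply: (span_le (sub_zero M)). Qed.

Definition JN (R : nzRingType) (M : lmodType R) (N : M -> Prop) : M -> Prop :=
  span (fun x => exists j n, [/\ Jr j, N n & x = j *: n]).

Lemma JN_sub (R : nzRingType) (M : lmodType R) (N : M -> Prop) : submodule (JN N).
Proof.
apply: span_subm => a g [j [n [Jj Nn ->]]]; exists (a * j), n; split=> //.
  exact: subL (J_sub R) Jj.
by rewrite scalerA.
Qed.

Lemma JN_gen (R : nzRingType) (M : lmodType R) (N : M -> Prop) j n :
  Jr j -> N n -> JN N (j *: n).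
Proof. by move=> Jj Nn; apply: span_gen; exists j, n. Qed.

Lemma JN_le (R : nzRingType) (M : lmodType R) (N : M -> Prop) :
  submodule N -> msub (JN N) N.
Proof. by move=> sN; apply: span_le => // _ [j [n [_ Nn ->]]]; apply: subZ. Qed.

Definition interN (R : nzRingType) (n : nat) (Lf : nat -> R^o -> Prop) : R^o -> Prop :=
  fun x => forall i, (i < n)%N -> Lf i x.

Lemma interN_sub (R : nzRingType) n (Lf : nat -> R^o -> Prop) :
  (forall i, (i < n)%N -> maxl (Lf i)) -> submodule (interN n Lf).
Proof.
move=> mL; split; first by move=> i lin; apply: sub0; apply: maxl_sub; apply: mL.
move=> a x y Hx Hy i lin; have [sL _ _ _] := mL i lin.
by case: sL => _; apply; [apply: Hx|apply: Hy].
Qed.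

Lemma J_inter (R : nzRingType) : left_artinian R ->
  exists n Lf, (forall i, (i < n)%N -> maxl (Lf i)) /\ meq (@Jr R) (interN n Lf).
Proof.
move=> art.
pose F := fun K : R^o -> Prop => exists n Lf,
  (forall i, (i < n)%N -> maxl (Lf i)) /\ meq K (interN n Lf).
have FS : forall K, F K -> submodule K.
  move=> K [n [Lf [mL EK]]]; have [H0 H1] := interN_sub mL; split; first by apply/EK.
  by move=> a x y Kx Ky; apply/EK; apply: H1; [apply/EK|apply/EK].
have [K0 [[n [Lf [mL EK]]] minK]] : exists K, F K /\
    forall K', F K' -> msub K' K -> msub K K'.
  apply: dcc_min => //; exists (fun _ => True), 0%N, (fun _ _ => True); split=> //.
exists n, Lf; split=> // x; split.
  by move=> Jx i lin; apply: (J_maxl Jx); apply: mL.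
move=> /EK K0x; split=> // L mLL.
pose Lf' := fun i => if (i < n)%N then Lf i else L.
have FK1 : F (fun x => K0 x /\ L x).
  exists n.+1, Lf'; split.
    by move=> i _; rewrite /Lf'; case: ifP => [lin|_]; [apply: mL|].
  move=> y; split.
    move=> [/EK Ky Ly] i; rewrite ltnS leq_eqVlt /Lf'.
    by case: ltnP => [lin|_]; [rewrite orbT => _; apply: Ky|].
  move=> H; split.
    by apply/EK => i lin; have := H i (ltnW lin); rewrite /Lf' lin.
  by have := H n (ltnSn n); rewrite /Lf' ltnn.
by case: (minK _ FK1 (fun y (H : K0 y /\ L y) => proj1 H) x K0x).
Qed.

Lemma e_struct (R : nzRingType) : left_artinian R -> exists n Lf (e : nat -> R),
  [/\ forall i, (i < n)%N -> maxl (Lf i),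
      forall i r, (i < n)%N -> Lf i r -> Jr (r * e i) &
      Jr (1 - \sum_(i < n) e i)].
Proof.
move=> art; have [n0 H0] := J_inter art.
have [n [[Lf [mL EJ]] minn]] := ex_minnat (ex_intro
  (fun n => exists Lf, (forall i, (i < n)%N -> maxl (Lf i)) /\ meq (@Jr R) (interN n Lf))
  n0 H0).
have irr : forall i, (i < n)%N -> exists a : R,
    (forall j, (j < n)%N -> j != i -> Lf j a) /\ ~ Lf i a.
  move=> i lin; apply: NNPP => H.
  apply: (minn n.-1); first by lia.
  exists (fun j => Lf (if (j < i)%N then j else j.+1)); split.
    by move=> j jlt; apply: mL; case: ifP => _; lia.
  move=> x; split.
    by move=> Jx j jlt; apply: (J_maxl Jx); apply: mL; case: ifP => _; lia.
  move=> Hx; apply/EJ => j jn.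
  have other : forall j, (j < n)%N -> j != i -> Lf j x.
    move=> j' j'n j'i; case: (ltnP j' i) => [j'i'|ij'].
      by have := Hx j' ltac:(lia); rewrite j'i'.
    have := Hx j'.-1 ltac:(lia).
    have -> : (j'.-1 < i)%N = false by apply/negbTE; lia.
    by rewrite prednK //; lia.
  case: (eqVneq j i) => [->|ji]; last exact: other.
  by apply: NNPP => nLi; apply: H; exists x.
have ex_e : forall i, exists e : R, (i < n)%N ->
    (forall j, (j < n)%N -> j != i -> Lf j e) /\ Lf i (1 - e).
  move=> i; case: (ltnP i n) => [lin|]; last by exists 0.
  have [a [Ha nLa]] := irr i lin.
  have [l [s [Ll E]]] := maxl_gen (mL i lin) nLa.
  exists (s * a) => _; split.
    by move=> j jn ji; apply: subL; [apply: maxl_sub; apply: mL|apply: Ha].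
  by rewrite E addrK.
pose e := fun i => epsilon (inhabits (0 : R)) (fun e : R => (i < n)%N ->
    (forall j, (j < n)%N -> j != i -> Lf j e) /\ Lf i (1 - e)).
have he : forall i, (i < n)%N ->
    (forall j, (j < n)%N -> j != i -> Lf j (e i)) /\ Lf i (1 - e i).
  by move=> i; apply: (epsilon_spec (inhabits (0 : R)) _ (ex_e i)).
exists n, Lf, e; split=> //.
  move=> i r lin Lr; apply/EJ => j jn; have sLj := maxl_sub (mL j jn).
  case: (eqVneq j i) => [->|ji].
    have -> : r * e i = r - r * (1 - e i) by rewrite mulrBr mulr1 opprB addrC subrK.
    apply: (subB (maxl_sub (mL i lin)) Lr).
    exact: (subL r (maxl_sub (mL i lin)) (proj2 (he i lin))).
  exact: (subL r sLj ((proj1 (he i lin)) j jn ji)).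
apply/EJ => j jn; have sLj := maxl_sub (mL j jn).
rewrite (bigD1 (Ordinal jn)) //= opprD addrA.
apply: (subB sLj (proj2 (he j jn))).
apply: (@sub_sum R R^o (Lf j) _ (index_enum _) _ (fun i : 'I_n => e i) sLj) => k kj.
apply: (proj1 (he k (ltn_ord k))) => //.
by move: kj; apply: contra => /eqP E; apply/eqP/val_inj.
Qed.

Lemma rad_JN (R : nzRingType) : left_artinian R ->
  forall (M : lmodType R) (N : M -> Prop), submodule N -> msub (Defs.rad N) (JN N).
Proof.
move=> art M N sN x Rx.
have [n [Lf [e [mL eJ e1]]]] := e_struct art.
apply: NNPP => nJx.
have sC := JN_sub N; have CN := JN_le sN.
have dec : forall z : M, z = (1 - \sum_(i < n) e i) *: z + \sum_(i < n) e i *: z.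
  by move=> z; rewrite scalerBl scale1r scaler_suml subrK.
have Nx : N x by case: Rx.
have [i [lin nCy]] : exists i, (i < n)%N /\ ~ JN N (e i *: x).
  apply: NNPP => H; apply: nJx; rewrite (dec x); apply: subD => //.
    exact: JN_gen.
  apply: (sub_sum _ sC) => k _; apply: NNPP => nC; apply: H; exists k; split=> //.
have [y Ey0] : exists y, y = e i *: x by eexists.
rewrite -Ey0 in nCy.
have Ny : N y by rewrite Ey0; apply: (subZ _ sN).
have [K [sK CK KN nKy maxK]] := zorn_sub sC CN nCy.
have key : forall j z, (j < n)%N -> N z -> forall L', submodule L' -> msub K L' ->
    L' y -> L' (e j *: z).
  move=> j z jn Nz L' sL' KL' L'y.
  case: (classic (K (e j *: z))) => [Kz|nKz]; first exact: KL'.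
  pose Cy := fun w : M => exists r, w = r *: (e j *: z).
  have sCy : submodule Cy.
    split; first by exists 0; rewrite scale0r.
    by move=> a u v [r ->] [r' ->]; exists (a * r + r'); rewrite scalerA scalerDl.
  have sK'' := sub_sadd sK sCy.
  have K''y : sadd K Cy y.
    apply: NNPP => nK''y.
    have := maxK _ sK'' (fun w Kw => ex_intro _ w (ex_intro _ 0 (And3 Kw
       (ex_intro _ 0 (esym (scale0r _))) (esym (addr0 w))))).
    move=> H; apply: nKz; apply: (H _ nK''y).
      move=> w [k [c [Kk [r ->] ->]]]; apply: (subD sN); first exact: KN.
      by apply: (subZ _ sN); apply: (subZ _ sN).
    by exists 0, (e j *: z); split; [apply: sub0|exists 1; rewrite scale1r|rewrite add0r].
  have [k [c [Kk [r Ec] Ey]]] := K''y.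
  have nLr : ~ Lf j r.
    move=> Lr; apply: nKy; rewrite Ey; apply: subD => //; apply: CK.
    by rewrite Ec scalerA; apply: JN_gen => //; apply: eJ.
  have [l [s [Ll E1]]] := maxl_gen (mL j jn) nLr.
  have -> : e j *: z = (l * e j) *: z + s *: (y - k).
    have -> : y - k = c by rewrite Ey addrC addKr.
    by rewrite Ec scalerA -scalerA -scalerDl -E1 scale1r.
  apply: subD => //; first by apply: KL'; apply: CK; apply: JN_gen => //; apply: eJ.
  by apply: subZ => //; apply: subB => //; apply: KL'.
have mK : maximal_sub N K.
  split=> //; first by move=> H; apply: nKy; apply: H.
  move=> L' sL' KL' L'N; case: (classic (L' y)) => [L'y|nL'y].
    right=> z; split; first exact: L'N.
    move=> Nz; rewrite (dec z); apply: subD => //.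
      by apply: KL'; apply: CK; apply: JN_gen.
    by apply: (sub_sum _ sL') => k _; apply: key.
  by left=> z; split; [apply: maxK|apply: KL'].
by apply: nKy; rewrite Ey0; apply: (subZ _ sK); case: Rx => _; apply.
Qed.

Fixpoint Epow (R : nzRingType) (m : nat) : R^o -> Prop :=
  match m with 0 => fun _ => True | m'.+1 => JN (@Epow R m') end.
Arguments Epow : clear implicits.

Lemma Epow_sub (R : nzRingType) m : submodule (Epow R m).
Proof. by case: m => [|m] /=; [apply: subT|apply: JN_sub]. Qed.

Lemma JN_mono (R : nzRingType) (M : lmodType R) (N N' : M -> Prop) :
  msub N N' -> msub (JN N) (JN N').
Proof.
move=> NN'; apply: span_mono => _ [j [n [Jj Nn ->]]]; exists j, n; split=> //.
exact: NN'.
Qed.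

Lemma Epow_desc (R : nzRingType) m : msub (Epow R m.+1) (Epow R m).
Proof. by elim: m => [|m IH] //=; apply: JN_mono. Qed.

Lemma Epow_J (R : nzRingType) m : msub (Epow R m.+1) (@Jr R).
Proof.
apply: span_le; first exact: J_sub.
by move=> _ [j [p [Jj _ ->]]]; apply: J_two.
Qed.

Lemma gen_pow (R : nzRingType) (V : R^o -> Prop) :
  (forall v, V v -> JN V v) -> forall m v, V v ->
  span (fun x : R^o => exists p w, [/\ Epow R m p, V w & x = p * w]) v.
Proof.
move=> hV; elim=> [|m IH] v Vv.
  by apply: span_gen; exists 1, v; rewrite mul1r.
apply: (span_map (f := id)) (hV v Vv) => // _ [j [w [Jj Vw ->]]].
apply: (span_map (f := fun t : R^o => (j * t : R^o))) (IH w Vw).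
- by rewrite mulr0.
- by move=> a b; rewrite mulrDr.
move=> _ [p [w' [Ep Vw' ->]]]; apply: span_gen; exists (j * p), w'; split=> //.
  exact: JN_gen.
by rewrite mulrA.
Qed.

Lemma nilp (R : nzRingType) : left_artinian R ->
  exists N, forall x, Epow R N x -> x = 0.
Proof.
move=> art.
have [N HN] := art (Epow R) (@Epow_sub R) (@Epow_desc R).
exists N; pose D := Epow R N.
have sD : submodule D := Epow_sub R N.
have hD : forall v, D v -> JN D v.
  by move=> v Dv; have /(HN N.+1 (leqnSn N)) : D v := Dv.
have DD := gen_pow hD N.
have DJ : msub D (@Jr R).
  by move=> v Dv; apply: (Epow_J (m:=N)); apply/(HN N.+1 (leqnSn N)).
move=> d Dd; apply: NNPP => nd0.
pose F := fun K : R^o -> Prop => submodule K /\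
  exists d k, [/\ D d, K k & d * k != 0].
have [K [[sK [d0 [x [Dd0 Kx nz]]]] minK]] :
    exists K, F K /\ forall K', F K' -> msub K' K -> msub K K'.
  apply: dcc_min => //; first by move=> K [].
  exists (fun _ => True); split; first exact: subT.
  by exists d, 1; rewrite mulr1; split=> //; apply/eqP.
pose K' := fun z : R^o => exists d, D d /\ z = d * x.
have sK' : submodule K'.
  apply: subLI; first by exists 0; rewrite mul0r; split=> //; apply: sub0.
  move=> a u v [d1 [Dd1 ->]] [d2 [Dd2 ->]]; exists (a * d1 + d2); split.
    by case: sD => _; apply.
  by rewrite mulrDl mulrA.
have K'K : msub K' K by move=> _ [d1 [Dd1 ->]]; apply: subL.
have FK' : F K'.
  split=> //; apply: NNPP => H.
  have Hs : span (fun z : R^o => z = 0) (d0 * x).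
    apply: (span_map (f := fun t : R^o => (t * x : R^o)) _ _ _ (DD d0 Dd0)).
    - by rewrite mul0r.
    - by move=> a b; rewrite mulrDl.
    move=> _ [p [w [Dp Dw ->]]]; apply: span_gen; apply: NNPP => nz'.
    apply: H; exists p, (w * x); split=> //; first by exists w.
    by rewrite mulrA; apply/eqP.
  by move/eqP: nz; apply; apply: (span_zero (G := fun z : R^o => z = 0)).
have [d1 [Dd1 Ex]] : K' x by apply: minK.
have [u Hu] := J_unit (DJ _ Dd1).
move/eqP: nz; apply.
have -> : x = 0 by rewrite -[x]mul1r -Hu -mulrA mulrBl mul1r -Ex subrr mulr0.
by rewrite mulr0.
Qed.

Lemma ll_Lambda (R : nzRingType) S : left_artinian R ->
  exists n, mzero (tS_iter S (fun _ : R^o => True) n).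
Proof.
move=> art.
pose I := tS_iter S (fun _ : R^o => True).
have sI : forall i, submodule (I i) by move=> i; apply: tS_iter_sub.
have Idesc : forall i, msub (I i.+1) (I i).
  move=> i x /= Hx; apply: (rad_le (A := I i)).
  exact: (tS_le (rad_sub (sI i)) Hx).
have [N HN] := art I sI Idesc.
have hI : forall v, I N v -> JN (I N) v.
  move=> v /(HN N.+1 (leqnSn N)) /= Hv.
  apply: (rad_JN art (sI N)); exact: (tS_le (rad_sub (sI N)) Hv).
have [N' HN'] := nilp art.
exists N => v Iv; apply: span_zero (gen_pow hI N' Iv).
by move=> _ [p [w [Ep _ ->]]]; rewrite (HN' p Ep) mul0r.
Qed.

Lemma simple_XS (R : nzRingType) (S : lmodType R -> Prop) (Sm : lmodType R) :
  S Sm -> XS S Sm.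
Proof.
move=> SSm; exists 1%N, (fun i (v : Sm) => if i is 0%N then v = 0 else True); split.
- by case=> [|i]; [apply: sub_zero|apply: subT].
- by move=> v.
- by move=> v.
- by case=> [|i] v.
move=> [|i] // _; exists Sm => //; exists id; split.
- by move=> a u v _ _.
- by move=> s; exists s.
- by move=> v _.
Qed.

Lemma msub_mono (R : nzRingType) (M : lmodType R) (F : nat -> M -> Prop) :
  (forall i, msub (F i) (F i.+1)) -> forall a b, (a <= b)%N -> msub (F a) (F b).
Proof.
move=> Fm a b; elim: b => [|b IH]; first by rewrite leqn0 => /eqP ->.
rewrite leq_eqVlt => /orP [/eqP ->|ab] //.
by move=> x /(IH ab) /Fm.
Qed.

Lemma P_TS (R : nzRingType) (S : lmodType R -> Prop) (M : lmodType R)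
  (P : lmodType R) (p : {linear P -> M}) :
  (forall Sm, S Sm -> simple_module Sm) ->
  proj_cover (tS S (fun _ : M => True)) p -> TS S P.
Proof.
move=> simS [fgP prP imp sup]; split=> // X [n [F [sF F0 Fn Fm Ffac]]] phi x.
apply: NNPP => nz.
have [i0 [Qi0 mini0]] := ex_minnat (ex_intro (fun i => forall y, F i (phi y)) n
   (fun y => proj2 (Fn (phi y)) I)).
case: i0 Qi0 mini0 => [|j] Qi0 mini0.
  by apply: nz; apply/F0.
have [x1 nFx1] : exists x1, ~ F j (phi x1).
  by apply: NNPP => H; apply: (mini0 j (ltnSn j)) => y; apply: NNPP => H1; apply: H; exists y.
have jn : (j < n)%N.
  rewrite ltnNge; apply/negP => nj; apply: nFx1.
  by apply: (msub_mono Fm nj); apply/Fn.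
have [Sm SSm [g [gl gs gk]]] := Ffac j jn.
have psil : forall a u v, g (phi (a *: u + v)) = a *: g (phi u) + g (phi v).
  by move=> a u v; rewrite linearP; apply: gl; apply: Qi0.
pose psi := mkLin psil.
have psiE : forall y, psi y = g (phi y) by [].
have psix1 : psi x1 != 0.
  by rewrite psiE; apply/eqP => /(gk _ (Qi0 x1)).
have [nzS simp] := simS Sm SSm.
have Om : forall w, p w = 0 -> psi w = 0.
  move=> w pw; apply: NNPP => nzw.
  have sIm : submodule (fun s => exists2 w, p w = 0 & psi w = s).
    split; first by exists 0; rewrite ?linear0.
    move=> a s t [w1 pw1 <-] [w2 pw2 <-]; exists (a *: w1 + w2).
      by rewrite linearP pw1 pw2 scaler0 addr0.
    by rewrite linearP.
  case: (simp _ sIm) => [Z|All].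
    by apply: nzw; apply: Z; exists w.
  have sK : submodule (fun y => psi y = 0).
    by split; [rewrite linear0|move=> a u v Hu Hv; rewrite linearP Hu Hv scaler0 addr0].
  have := sup _ sK; move=> H; move/eqP: psix1; apply; apply: H => y.
  have [w1 pw1 Ew1] := All (psi y).
  exists w1 => //; exists (y - w1); first by rewrite linearB Ew1 subrr.
  by rewrite addrC subrK.
pose pre := fun m : M => epsilon (inhabits (0 : P)) (fun y => p y = m).
pose psi' := fun m : M => psi (pre m).
have wd : forall y, psi' (p y) = psi y.
  move=> y; rewrite /psi'.
  have pp : p (pre (p y)) = p y by apply: (epsilon_spec (inhabits (0:P)) (fun z => p z = p y)); exists y.
  have : psi (pre (p y) - y) = 0 by apply: Om; rewrite linearB pp subrr.
  by rewrite linearB => /eqP; rewrite subr_eq0 => /eqP.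
have inim : forall m, tS S (fun _ : M => True) m -> exists y, p y = m.
  by move=> m /imp.
have allz : forall (T : lmodType R) (f : {linear T -> M}), TS S T ->
    forall y, psi' (f y) = 0.
  move=> T f TT.
  have fim : forall y, exists x, p x = f y.
    by move=> y; apply: inim; apply: (tS_img (A := fun _ => True)).
  have cl : forall a u v, psi' (f (a *: u + v)) = a *: psi' (f u) + psi' (f v).
    move=> a u v; have [xu Eu] := fim u; have [xv Ev] := fim v.
    by rewrite linearP -Eu -Ev -linearP !wd linearP.
  move=> y; have := (proj2 TT) Sm (simple_XS SSm) (mkLin cl) y; done.
pose B := fun m : M => exists y, p y = m /\ psi y = 0.
have sB : submodule B.
  split; first by exists 0; rewrite !linear0.
  move=> a u v [y1 [<- E1]] [y2 [<- E2]]; exists (a *: y1 + y2).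
  by rewrite !linearP E1 E2 scaler0 addr0.
have tB : forall m, tS S (fun _ : M => True) m -> B m.
  move=> m Hm; apply: Hm => // T f TT _ y.
  have [x2 Ex2] := inim _ (@tS_img _ S M T (fun _ => True) f y TT (fun _ => I)).
  by exists x2; split=> //; rewrite -wd Ex2; apply: allz.
have [y [Ey Py]] := tB (p x1) (proj1 (imp (p x1)) (ex_intro _ x1 erefl)).
move/eqP: psix1; apply.
have : psi (x1 - y) = 0 by apply: Om; rewrite linearB Ey subrr.
by rewrite linearB Py subr0.
Qed.

Lemma tS_full (R : nzRingType) (S : lmodType R -> Prop) (P : lmodType R) :
  TS S P -> forall x, tS S (fun _ : P => True) x.
Proof. by move=> TP x; apply: (@tS_img _ S P P (fun _ => True) (idLin P) x TP). Qed.

Lemma Om_rad (R : nzRingType) (S : lmodType R -> Prop) (M P : lmodType R)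
  (p : {linear P -> M}) :
  proj_cover (tS S (fun _ : M => True)) p -> TS S P ->
  forall x, p x = 0 -> Defs.rad (tS S (fun _ : P => True)) x.
Proof.
move=> [_ _ _ sup] TP w pw; split; first exact: tS_full.
move=> L [sL _ nTL maxL]; apply: NNPP => nLw.
have sO : submodule (fun x : P => p x = 0).
  by split; [rewrite linear0|move=> a u v Hu Hv; rewrite linearP Hu Hv scaler0 addr0].
have sL' := sub_sadd sL sO.
have LL' : msub L (sadd L (fun x : P => p x = 0)).
  by move=> u Lu; exists u, 0; rewrite addr0 linear0; split.
case: (maxL _ sL' LL' (fun u _ => tS_full TP u)) => [EL|ET].
  by apply: nLw; apply/EL; exists 0, w; rewrite add0r; split=> //; apply: sub0.
apply: nTL => u _; apply: (sup _ sL) => y.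
have [a [b [La pb ->]]] := proj2 (ET y) (tS_full TP y).
by exists b => //; exists a => //; rewrite addrC.
Qed.

Lemma iter_cmp (R : nzRingType) (S : lmodType R -> Prop) (M P : lmodType R)
  (p : {linear P -> M}) :
  proj_cover (tS S (fun _ : M => True)) p -> TS S P ->
  forall i x, tS_iter S (fun x : P => p x = 0) i x ->
    tS_iter S (fun _ : P => True) i.+1 x.
Proof.
move=> pc TP; elim=> [|i IH] x /=.
  by apply: tS_mono; apply: Om_rad.
apply: tS_mono; apply: rad_mono; [exact: tS_iter_sub|exact: tS_sub|exact: IH].
Qed.

Lemma embed (R : nzRingType) (S : lmodType R -> Prop) (M P : lmodType R)
  (p : {linear P -> M}) :
  proj_cover (tS S (fun _ : M => True)) p ->
  forall i, mzero (tS_iter S (fun _ : R^o => True) i) ->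
    mzero (tS_iter S (fun _ : P => True) i).
Proof.
move=> [[s Hs] prP _ _] i Z x Hx.
pose n := size s.
have gl : forall a (u v : 'rV[R]_n),
    \sum_(k < n) (a *: u + v) 0 k *: s`_k =
    a *: \sum_(k < n) u 0 k *: s`_k + \sum_(k < n) v 0 k *: s`_k.
  move=> a u v; rewrite scaler_sumr -big_split /=; apply: eq_bigr => k _.
  by rewrite !mxE scalerDl scalerA.
pose g := mkLin gl.
have gsurj : forall y : P, exists v, g v = y.
  move=> y; have [r [_ Er]] := Hs y; exists (\row_(k < n) r`_k).
  by rewrite mkLinE Er; apply: eq_bigr => k _; rewrite mxE.
have [h gh] := prP _ _ g (idLin P) gsurj.
have pil : forall k a (u v : 'rV[R]_n),
    (a *: u + v) 0 k = (a *: (u 0 k : R^o) + v 0 k : R^o).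
  by move=> k a u v; rewrite !mxE.
have hx0 : h x = 0.
  apply/rowP => k; rewrite mxE.
  have cl : forall a (u v : P), ((h (a *: u + v)) 0 k : R^o) =
      a *: ((h u) 0 k : R^o) + ((h v) 0 k : R^o).
    by move=> a u v; rewrite linearP; apply: pil.
  pose c := mkLin (U := P) (V := R^o) cl.
  have := @tS_iter_fun R S P R^o c (fun _ => True) (fun _ => True) (fun _ _ => I) i x Hx.
  by move=> /Z.
by rewrite -[x]gh hx0 linear0.
Qed.

Theorem lemma4p3 (R : nzRingType) (S : lmodType R -> Prop) (M : lmodType R) :
  left_artinian R ->
  (forall Sm, S Sm -> simple_module Sm) ->
  fin_gen M ->
  ~ mzero (tS S (fun _ : M => True)) ->
  forall (P : lmodType R) (p : {linear P -> M}),
    proj_cover (tS S (fun _ : M => True)) p ->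
    exists a b : nat,
      [/\ is_llt S (fun _ : R^o => True) a,
          is_llt S (fun x : P => p x = 0) b &
          (b + 1 <= a)%N].
Proof.
move=> art simS fgM ntM P p pc.
have TP := P_TS simS pc.
have [a0 Ha0] := ll_Lambda S art.
have [a [Za mina]] := ex_minnat (ex_intro
  (fun n => mzero (tS_iter S (fun _ : R^o => True) n)) a0 Ha0).
have a_pos : (0 < a)%N.
  case: a Za mina => // Z0 _; exfalso; apply: ntM => m Hm.
  have [_ _ imp _] := pc.
  have [x px] := proj2 (imp m) Hm.
  have := embed pc Z0 (tS_full TP x).
  by move=> x0; rewrite -px x0 linear0.
have Zb : mzero (tS_iter S (fun x : P => p x = 0) a.-1).
  move=> x Hx; apply: (embed pc Za).
  by have := iter_cmp pc TP Hx; rewrite prednK.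
have [b [Zb' minb]] := ex_minnat (ex_intro
  (fun n => mzero (tS_iter S (fun x : P => p x = 0) n)) a.-1 Zb).
exists a, b; split=> //.
rewrite addn1; case: (ltnP b a) => // ab; exfalso.
by apply: (minb a.-1) => //; lia.
Qed.
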